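(* Let $\rho_0>0$, $n\in\mathbb{N}$, $y_0\in\mathbb{R}^n$, and let $f:\mathbb{R}_{>0}\times\mathbb{C}^n\to\mathbb{C}^n$ be continuous. Assume there is $c\geq0$ such that $|f(t,y_1)-f(t,y_2)|\leq c|y_1-y_2|$ for all $y_1,y_2\in\mathbb{C}^n$ and $t>0$, and that $(t\mapsto f(t,0))\in L^2_{\rho_0}(\mathbb{R}_{>0};\mathbb{C}^n)$. Define $\tilde f:\mathbb{R}\times\mathbb{C}^n\to\mathbb{C}^n$ by $\tilde f(t,y):=f(t,y)$ if $t>0$ and $\tilde f(t,y):=0$ otherwise. Then the mapping $F:C_c^\infty(\mathbb{R};\mathbb{C}^n)\to C(\mathbb{R};\mathbb{C}^n)$, $F(\varphi)(t):=\tilde f(t,\varphi(t)+y_0)$, is eventually $(0,0)$-Lipschitz continuous.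
   Context: For $\rho\in\mathbb{R}$, $L^2_\rho(\mathbb{R};\mathbb{C}^n)$ is the space of measurable $g$ with $\int|g(t)|^2e^{-2\rho t}dt<\infty$ (similarly on $\mathbb{R}_{>0}$); this coincides with the space $H^0_\rho(\mathbb{R};\mathbb{C}^n)$ with norm $\|\cdot\|_{\rho,0}=\|\cdot\|_{L^2_\rho}$. Definition: a map $F$ defined on a domain containing $C_c^\infty(\mathbb{R};\mathbb{C}^n)$ is eventually $(0,0)$-Lipschitz continuous if there is $\nu\geq\rho_0$ such that for each $\rho\geq\nu$, $F$ takes values in $L^2_\rho(\mathbb{R};\mathbb{C}^n)$ and has a Lipschitz continuous extension $F_\rho:L^2_\rho(\mathbb{R};\mathbb{C}^n)\to L^2_\rho(\mathbb{R};\mathbb{C}^n)$ with $\sup_{\rho\geq\nu}|F_\rho|_{\mathrm{Lip}}<\infty$. *)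

(* Defs.v *)
From HB Require Import structures.
From mathcomp Require Import all_boot all_order all_algebra.
From mathcomp Require Import all_classical all_reals all_analysis.
From mathcomp Require Import complex.
Set Implicit Arguments. Unset Strict Implicit. Unset Printing Implicit Defensive.
Import Order.TTheory GRing.Theory Num.Theory.
Local Open Scope ring_scope.
Local Open Scope classical_set_scope.

(* C^n is modelled as row vectors 'rV[R[i]]_n over the complex numbers R[i]
   (R : realType, complex numbers from mathcomp-real-closed). *)

Definition cnorm {R : realType} {n : nat} (v : 'rV[R[i]]_n) : R :=
  Num.sqrt (\sum_(i < n) ((complex.Re (v 0 i)) ^+ 2 + (complex.Im (v 0 i)) ^+ 2)).

Definition real_to_cvec {R : realType} {n : nat} (y : 'rV[R]_n) : 'rV[R[i]]_n :=
  map_mx (fun x => real_complex R x) y.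

Definition cmeasurable {R : realType} {n : nat} (D : set R)
  (g : R -> 'rV[R[i]]_n) : Prop :=
  forall i : 'I_n, measurable_fun D (fun t => complex.Re (g t 0 i)) /\
                   measurable_fun D (fun t => complex.Im (g t 0 i)).

Definition L2w_int {R : realType} {n : nat} (D : set R) (rho : R)
  (g : R -> 'rV[R[i]]_n) : \bar R :=
  (\int[lebesgue_measure]_(t in D) ((cnorm (g t)) ^+ 2 * expR (- (2 * rho * t)))%:E)%E.

Definition inL2w {R : realType} {n : nat} (D : set R) (rho : R)
  (g : R -> 'rV[R[i]]_n) : Prop :=
  cmeasurable D g /\ (L2w_int D rho g < +oo)%E.

Definition L2norm {R : realType} {n : nat} (rho : R) (g : R -> 'rV[R[i]]_n) : R :=
  Num.sqrt (fine (L2w_int setT rho g)).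

Definition smoothR {R : realType} (g : R -> R) : Prop :=
  forall (k : nat) (x : R), derivable (derive1n k g) x 1.

Definition Cc_infty {R : realType} {n : nat} (phi : R -> 'rV[R[i]]_n) : Prop :=
  (forall i : 'I_n, smoothR (fun t => complex.Re (phi t 0 i)) /\
                    smoothR (fun t => complex.Im (phi t 0 i))) /\
  exists M : R, forall t : R, M < `|t| -> phi t = 0.

Definition eventually_00_Lipschitz {R : realType} {n : nat} (rho0 : R)
  (F : (R -> 'rV[R[i]]_n) -> (R -> 'rV[R[i]]_n)) : Prop :=
  exists nu : R, rho0 <= nu /\
  exists L : R, forall rho : R, nu <= rho ->
    (forall phi, Cc_infty phi -> inL2w setT rho (F phi)) /\
    exists Frho : (R -> 'rV[R[i]]_n) -> (R -> 'rV[R[i]]_n),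
      (forall u, inL2w setT rho u -> inL2w setT rho (Frho u)) /\
      (forall phi, Cc_infty phi ->
         {ae lebesgue_measure, forall t, Frho phi t = F phi t}) /\
      (forall u v, inL2w setT rho u -> inL2w setT rho v ->
         L2norm rho (Frho u \- Frho v) <= L * L2norm rho (u \- v)).

(* Main.v *)
Require Import Defs.
From HB Require Import structures.
From mathcomp Require Import all_boot all_order all_algebra.
From mathcomp Require Import all_classical all_reals all_analysis.
From mathcomp Require Import complex.
From mathcomp Require Import lra.
From mathcomp Require Import measurable_realfun exponential_distribution.
Import Order.TTheory GRing.Theory Num.Theory.
Import numFieldTopology.Exports numFieldNormedType.Exports.
Local Open Scope ring_scope.
Local Open Scope classical_set_scope.

Section basics.
Context {R : realType} {n : nat}.
Implicit Types (u v : 'rV[R[i]]_n).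

Definition N2 v : R := \sum_(i < n) ((complex.Re (v 0 i)) ^+ 2 + (complex.Im (v 0 i)) ^+ 2).

Lemma N2_ge0 v : 0 <= N2 v.
Proof. by apply: sumr_ge0 => i _; rewrite addr_ge0 // sqr_ge0. Qed.

Lemma cnormE v : cnorm v = Num.sqrt (N2 v). Proof. by []. Qed.

Lemma cnorm2 v : cnorm v ^+ 2 = N2 v.
Proof. by rewrite cnormE sqr_sqrtr // N2_ge0. Qed.

Lemma cnorm_ge0 v : 0 <= cnorm v.
Proof. exact: sqrtr_ge0. Qed.

Lemma ReD (x y : R[i]) : complex.Re (x + y) = complex.Re x + complex.Re y.
Proof. by case: x => ? ?; case: y. Qed.
Lemma ImD (x y : R[i]) : complex.Im (x + y) = complex.Im x + complex.Im y.
Proof. by case: x => ? ?; case: y. Qed.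
Lemma ReB (x y : R[i]) : complex.Re (x - y) = complex.Re x - complex.Re y.
Proof. by case: x => ? ?; case: y. Qed.
Lemma ImB (x y : R[i]) : complex.Im (x - y) = complex.Im x - complex.Im y.
Proof. by case: x => ? ?; case: y. Qed.
Lemma Re0 : complex.Re (0 : R[i]) = 0. Proof. by []. Qed.
Lemma Im0 : complex.Im (0 : R[i]) = 0. Proof. by []. Qed.

Lemma N2D u v : N2 (u + v) <= 2 * N2 u + 2 * N2 v.
Proof.
rewrite /N2 !mulr_sumr -big_split /=; apply: ler_sum => i _.
rewrite !mxE ReD ImD. set a := complex.Re _. set b := complex.Re _. set c := complex.Im _. set d := complex.Im _. have := sqr_ge0 (a - b); have := sqr_ge0 (c - d); nra.
Qed.

Lemma N20 : N2 (0 : 'rV[R[i]]_n) = 0.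
Proof. by rewrite /N2 big1 // => i _; rewrite mxE Re0 Im0 expr0n /= addr0. Qed.

Lemma Re_le_cnorm v i : `|complex.Re (v 0 i)| <= cnorm v.
Proof.
rewrite cnormE -(sqrtr_sqr (complex.Re (v 0 i))) ler_sqrt ?N2_ge0 //.
rewrite /N2 (bigD1 i) //= -addrA lerDl addr_ge0 ?sqr_ge0 //.
by apply: sumr_ge0 => j _; rewrite addr_ge0 // sqr_ge0.
Qed.

Lemma Im_le_cnorm v i : `|complex.Im (v 0 i)| <= cnorm v.
Proof.
rewrite cnormE -(sqrtr_sqr (complex.Im (v 0 i))) ler_sqrt ?N2_ge0 //.
rewrite /N2 (bigD1 i) //= [_ ^+ 2 + _]addrC -addrA lerDl addr_ge0 ?sqr_ge0 //.
by apply: sumr_ge0 => j _; rewrite addr_ge0 // sqr_ge0.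
Qed.

Lemma lip_N2 (c : R) u v : 0 <= c -> cnorm u <= c * cnorm v -> N2 u <= c ^+ 2 * N2 v.
Proof.
move=> c0 h; rewrite -!cnorm2 -exprMn; have := cnorm_ge0 u; have := cnorm_ge0 v.
move=> h1 h2; rewrite ler_pXn2r // ?nnegrE //; exact: mulr_ge0.
Qed.

Definition proj (b : bool) (z : R[i]) := if b then complex.Re z else complex.Im z.

Lemma projB b (x y : R[i]) : proj b (x - y) = proj b x - proj b y.
Proof. by case: b; rewrite /proj ?ReB ?ImB. Qed.

Lemma proj_le_cnorm b v i : `|proj b (v 0 i)| <= cnorm v.
Proof. by case: b; [exact: Re_le_cnorm | exact: Im_le_cnorm]. Qed.

Lemma cmeasurableP D (g : R -> 'rV[R[i]]_n) :
  cmeasurable D g <-> forall i b, measurable_fun D (fun t => proj b (g t 0 i)).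
Proof.
split.
- by move=> h i [] /=; [exact: (h i).1 | exact: (h i).2].
- by move=> h i; split; [exact: (h i true) | exact: (h i false)].
Qed.

Lemma quant_err (K x : R) : 1 <= K ->
  (x - (Num.floor (K * x))%:~R / K) ^+ 2 <= K^-1.
Proof.
move=> K1; have K0 : 0 < K by apply: lt_le_trans K1.
set m := Num.floor (K * x).
have h1 := Num.Theory.floor_le (K * x).
have h2 := Num.Theory.floorD1_gt (K * x).
rewrite -/m intrD in h1 h2.
set a := m%:~R in h1 h2 *.
have -> : x - a / K = (K * x - a) * K^-1.
  by rewrite mulrBl mulrAC mulfV ?mul1r // gt_eqF.
set d := K * x - a.
have d0 : 0 <= d by rewrite /d subr_ge0.
have d1 : d < 1 by rewrite /d ltrBlDl.
have Ki0 : 0 < K^-1 by rewrite invr_gt0.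
have Ki1 : K^-1 <= 1 by rewrite invr_le1 // unitfE gt_eqF.
have hd2 : d ^+ 2 <= 1 by rewrite expr2; nra.
have hk2 : K^-1 ^+ 2 <= K^-1 by rewrite expr2; nra.
rewrite exprMn; apply: (@le_trans _ _ (1 * K^-1 ^+ 2)); last by rewrite mul1r.
by apply: ler_wpM2r => //; rewrite exprn_ge0 // ltW.
Qed.

End basics.

Section comp.
Context {R : realType} {n : nat}.

Definition Kq (k : nat) : R := k.+1%:R.
Definition idxq (k : nat) (v : 'rV[R[i]]_n) : {ffun 'I_n -> int * int} :=
  [ffun j => (Num.floor (Kq k * complex.Re (v 0 j)), Num.floor (Kq k * complex.Im (v 0 j)))].
Definition vzq (k : nat) (z : {ffun 'I_n -> int * int}) : 'rV[R[i]]_n :=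
  \row_j (Complex (((z j).1)%:~R / Kq k) (((z j).2)%:~R / Kq k)).

Lemma Kq1 k : 1 <= Kq k.
Proof. by rewrite /Kq ler1n. Qed.

Lemma quant_N2 k v : N2 (v - vzq k (idxq k v)) <= (2 * n)%:R * (Kq k)^-1.
Proof.
rewrite /N2.
apply: (@le_trans _ _ (\sum_(j < n) (2 * (Kq k)^-1))).
  apply: ler_sum => j _; rewrite !mxE ReB ImB ffunE /=.
  by rewrite mulr2n mulrDl mul1r lerD // quant_err // Kq1.
by rewrite sumr_const card_ord -[_ *+ n]mulr_natr natrM mulrAC.
Qed.


Lemma floor_set (g : R -> R) (m : int) : measurable_fun setT g ->
  measurable [set t | Num.floor (g t) = m].
Proof.
move=> mg.
have -> : [set t | Num.floor (g t) = m] = setT `&` g @^-1` `[m%:~R, (m + 1)%:~R[.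
  apply/seteqP; split => t /=.
    by move=> <-; split => //; rewrite /= in_itv /= floor_le floorD1_gt.
  by move=> [_]; rewrite /= in_itv /= => h; apply/eqP; rewrite floor_eq.
exact: mg.
Qed.

Lemma comp_meas (H : R -> 'rV[R[i]]_n -> 'rV[R[i]]_n) (c : R) :
  0 <= c ->
  (forall y, cmeasurable setT (fun t => H t y)) ->
  (forall t y1 y2, cnorm (H t y1 - H t y2) <= c * cnorm (y1 - y2)) ->
  forall w, cmeasurable setT w -> cmeasurable setT (fun t => H t (w t)).
Proof.
move=> c0 mH lH w mw; apply/cmeasurableP => i b.
have mw' := (cmeasurableP _ _).1 mw.
apply: (@measurable_fun_cvg _ _ _ _
  (fun k t => proj b (H t (vzq k (idxq k (w t))) 0 i))).
- move=> k _ /= Y mY; rewrite setTI.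
  have -> : (fun t => proj b (H t (vzq k (idxq k (w t))) 0 i)) @^-1` Y =
      \bigcup_(m in setT) (match unpickle m with
        | Some z => [set t | idxq k (w t) = z] `&`
                    ((fun t => proj b (H t (vzq k z) 0 i)) @^-1` Y)
        | None => set0 end).
    apply/seteqP; split => t /=.
      by move=> Yt; exists (pickle (idxq k (w t))) => //; rewrite pickleK.
    by case=> m _; case: (unpickle m) => // z [/= -> ].
  apply: bigcup_measurable => m _; case: (unpickle m) => // z.
  apply: measurableI; last first.
    by have := (cmeasurableP _ _).1 (mH (vzq k z)) i b measurableT Y mY; rewrite setTI.
  have -> : [set t | idxq k (w t) = z] =
      \bigcap_(j in [set` enum 'I_n])
        ([set t | Num.floor (Kq k * proj true (w t 0 j)) = (z j).1] `&`
         [set t | Num.floor (Kq k * proj false (w t 0 j)) = (z j).2]).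
    apply/seteqP; split => t /=.
      by move=> <- j _; rewrite ffunE.
    move=> h; apply/ffunP => j; rewrite ffunE.
    have [-> ->] := h j (mem_enum _ j).
    by case: (z j).
  rewrite bigcap_seq; apply: bigsetI_measurable => j _.
  apply: measurableI; apply: floor_set;
    by apply: measurable_funM; [exact: measurable_cst | exact: mw'].
- move=> t _ /=; apply/cvgrPdist_lt => e e0.
  near=> k.
  rewrite -projB.
  rewrite (_ : H t (w t) 0 i - H t (vzq k (idxq k (w t))) 0 i =
     (H t (w t) - H t (vzq k (idxq k (w t)))) 0 i); last by rewrite !mxE.
  apply: (le_lt_trans (proj_le_cnorm _ _ _)).
  set d := w t - vzq k (idxq k (w t)).
  have hd : cnorm (H t (w t) - H t (vzq k (idxq k (w t)))) <= c * cnorm d := lH _ _ _.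
  apply: (le_lt_trans hd).
  have hN := quant_N2 k (w t); rewrite -/d in hN.
  have hK : c ^+ 2 * (2 * n)%:R / e ^+ 2 < Kq k.
    apply: (@le_lt_trans _ _ k%:R); last by rewrite /Kq ltr_nat.
    by near: k; apply: nbhs_infty_ger.
  have Kp : 0 < Kq k by apply: lt_le_trans (Kq1 k).
  have e2 : 0 < e ^+ 2 by rewrite exprn_gt0.
  rewrite -(@ltr_pXn2r _ 2) //; last 2 first.
    by rewrite nnegrE mulr_ge0 // cnorm_ge0.
    by rewrite nnegrE ltW.
  rewrite exprMn cnorm2.
  have hN2 : N2 d * Kq k <= (2 * n)%:R.
    by rewrite -ler_pdivlMr.
  rewrite ltr_pdivrMr // in hK.
  have C0 : 0 <= c ^+ 2 by rewrite sqr_ge0.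
  have N0 : 0 <= N2 d by exact: N2_ge0.
  move: hK hN2 C0 N0 Kp e2.
  set C := c ^+ 2; set N := N2 d; set K := Kq k; set E := e ^+ 2; set M := (2 * n)%:R.
  move=> *; nra.
Unshelve. all: by end_near.
Qed.

End comp.

Section Hmeas.
Context {R : realType} {n : nat}.

Lemma cnorm0 : cnorm (0 : 'rV[R[i]]_n) = 0.
Proof. by rewrite cnormE N20 sqrtr0. Qed.

Lemma proj0 b : proj b (0 : R[i]) = 0. Proof. by case: b. Qed.

Lemma H_meas (f : R -> 'rV[R[i]]_n -> 'rV[R[i]]_n) :
  (forall (t : R) (y : 'rV[R[i]]_n), 0 < t -> forall eps : R, 0 < eps ->
     exists2 delta : R, 0 < delta &
       forall (s : R) (z : 'rV[R[i]]_n), 0 < s -> `|s - t| < delta ->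
         cnorm (z - y) < delta -> cnorm (f s z - f t y) < eps) ->
  forall y, cmeasurable setT (fun t => if 0 < t then f t y else 0).
Proof.
move=> hc y; apply/cmeasurableP => i b.
pose g : R -> R := fun t => proj b (f t y 0 i).
rewrite (_ : (fun t => proj b ((if 0 < t then f t y else 0) 0 i)) =
   g \_ `]0, +oo[); last first.
  apply/funext => t; rewrite patchE.
  have -> : (t \in `]0, +oo[%classic) = (0 < t).
    by rewrite mem_setE in_itv /= andbT.
  by case: ifP => //; rewrite mxE proj0.
apply: (measurable_restrictT g _).1 => //.
apply: open_continuous_measurable_fun; first exact: interval_open.
move=> t; rewrite inE /= in_itv /= andbT => t0.
apply/cvgrPdist_lt => e e0.
have [dl dl0 hd] := hc t y t0 e e0.
apply/nbhs_ballP; exists (Num.min dl t); first by rewrite /= lt_min dl0 t0.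
move=> s; rewrite /ball /= lt_min => /andP[h1 h2].
have s0 : 0 < s.
  by move: h2; rewrite ltr_distlC => /andP[]; rewrite subrr.
have := hd s y s0; rewrite distrC => /(_ h1); rewrite subrr cnorm0 => /(_ dl0) h.
rewrite distrC -projB.
rewrite (_ : f s y 0 i - f t y 0 i = (f s y - f t y) 0 i); last by rewrite !mxE.
exact: (le_lt_trans (proj_le_cnorm _ _ _)).
Qed.

End Hmeas.

Section intg.
Context {R : realType}.
Local Notation mu := (@lebesgue_measure R).

Lemma int_le_fin (g h : R -> R) : (forall t, 0 <= g t <= h t) ->
  measurable_fun setT g -> measurable_fun setT h ->
  (\int[mu]_(t in setT) (h t)%:E < +oo)%E ->
  (\int[mu]_(t in setT) (g t)%:E < +oo)%E.
Proof.
move=> gh mg mh hf; apply: le_lt_trans hf.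
apply: ge0_le_integral => //.
- by move=> t _; rewrite lee_fin; case/andP: (gh t).
- exact/measurable_EFinP.
- exact/measurable_EFinP.
- by move=> t _; rewrite lee_fin; case/andP: (gh t).
Qed.

Lemma int_add_fin (g h : R -> R) : (forall t, 0 <= g t) -> (forall t, 0 <= h t) ->
  measurable_fun setT g -> measurable_fun setT h ->
  (\int[mu]_(t in setT) (g t)%:E < +oo)%E ->
  (\int[mu]_(t in setT) (h t)%:E < +oo)%E ->
  (\int[mu]_(t in setT) (g t + h t)%:E < +oo)%E.
Proof.
move=> g0 h0 mg mh ig ih.
under eq_integral do rewrite EFinD.
rewrite ge0_integralD //.
- exact: lte_add_pinfty.
- by move=> t _; rewrite lee_fin.
- exact/measurable_EFinP.
- by move=> t _; rewrite lee_fin.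
- exact/measurable_EFinP.
Qed.

Lemma int_scale_fin (g : R -> R) (a : R) : 0 <= a -> (forall t, 0 <= g t) ->
  measurable_fun setT g ->
  (\int[mu]_(t in setT) (g t)%:E < +oo)%E ->
  (\int[mu]_(t in setT) (a * g t)%:E < +oo)%E.
Proof.
move=> a0 g0 mg ig.
under eq_integral do rewrite EFinM.
rewrite ge0_integralZl_EFin //.
- by apply: lte_mul_pinfty.
- by move=> t _; rewrite lee_fin.
- exact/measurable_EFinP.
Qed.

End intg.

Section meas2.
Context {R : realType} {n : nat}.

Lemma N2_meas (g : R -> 'rV[R[i]]_n) : cmeasurable setT g ->
  measurable_fun setT (fun t => N2 (g t)).
Proof.
move=> mg; rewrite /N2; apply: measurable_sum => i.
have [h1 h2] := mg i.
by apply: measurable_funD; apply: measurable_funX.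
Qed.

Lemma w_meas (rho : R) : measurable_fun setT (fun t : R => expR (- (2 * rho * t))).
Proof.
apply: continuous_measurable_fun => t.
apply: continuous_comp; last exact: continuous_expR.
by apply: continuousN; apply: continuousM => //; exact: cst_continuous.
Qed.

Lemma integrand_meas (g : R -> 'rV[R[i]]_n) rho : cmeasurable setT g ->
  measurable_fun setT (fun t => N2 (g t) * expR (- (2 * rho * t))).
Proof. by move=> mg; apply: measurable_funM; [exact: N2_meas | exact: w_meas]. Qed.

Lemma cmeas_add (u v : R -> 'rV[R[i]]_n) : cmeasurable setT u -> cmeasurable setT v ->
  cmeasurable setT (fun t => u t + v t).
Proof.
move=> mu mv; apply/cmeasurableP => i b.
have mu' := (cmeasurableP _ _).1 mu i b; have mv' := (cmeasurableP _ _).1 mv i b.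
rewrite (_ : (fun t => proj b ((u t + v t) 0 i)) = (fun t => proj b (u t 0 i) + proj b (v t 0 i))).
  exact: measurable_funD.
by apply/funext => t; rewrite mxE /proj; case: (b); rewrite ?ReD ?ImD.
Qed.

Lemma cmeas_sub (u v : R -> 'rV[R[i]]_n) : cmeasurable setT u -> cmeasurable setT v ->
  cmeasurable setT (fun t => u t - v t).
Proof.
move=> mu mv; apply/cmeasurableP => i b.
have mu' := (cmeasurableP _ _).1 mu i b; have mv' := (cmeasurableP _ _).1 mv i b.
rewrite (_ : (fun t => proj b ((u t - v t) 0 i)) = (fun t => proj b (u t 0 i) - proj b (v t 0 i))).
  exact: measurable_funB.
by apply/funext => t; rewrite !mxE projB.
Qed.

Lemma cmeas_cst (y : 'rV[R[i]]_n) : cmeasurable setT (fun _ : R => y).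
Proof. by move=> i; split; exact: measurable_cst. Qed.

End meas2.

Section main.
Context {R : realType} {n : nat}.
Implicit Types (f : R -> 'rV[R[i]]_n -> 'rV[R[i]]_n).

Definition Ht f (t : R) (y : 'rV[R[i]]_n) := if 0 < t then f t y else 0.

Lemma Ht_lip f (c : R) : 0 <= c ->
  (forall (t : R) (y1 y2 : 'rV[R[i]]_n), 0 < t ->
       cnorm (f t y1 - f t y2) <= c * cnorm (y1 - y2)) ->
  forall t y1 y2, cnorm (Ht f t y1 - Ht f t y2) <= c * cnorm (y1 - y2).
Proof.
move=> c0 hl t y1 y2; rewrite /Ht; case: ifP => t0; first exact: hl.
by rewrite subrr cnorm0 mulr_ge0 // cnorm_ge0.
Qed.

Lemma pt_bound f (c rho : R) (y : 'rV[R[i]]_n) (u : 'rV[R[i]]_n) (t : R) :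
  0 <= c -> 0 < rho ->
  (forall (t : R) (y1 y2 : 'rV[R[i]]_n), 0 < t ->
       cnorm (f t y1 - f t y2) <= c * cnorm (y1 - y2)) ->
  N2 (Ht f t (u + y)) * expR (- (2 * rho * t)) <=
  4 * c ^+ 2 * (N2 u * expR (- (2 * rho * t))) +
  (4 * c ^+ 2 * N2 y / (2 * rho)) * exponential_pdf (2 * rho) t +
  2 * (N2 (Ht f t 0) * expR (- (2 * rho * t))).
Proof.
move=> c0 rho0 hl.
have W0 : 0 < expR (- (2 * rho * t)) := expR_gt0 _.
have hU := N2_ge0 u; have hY := N2_ge0 y.
have hC : 0 <= c ^+ 2 by rewrite sqr_ge0.
have hE : 0 <= exponential_pdf (2 * rho) t.
  by apply: exponential_pdf_ge0; rewrite mulr_ge0 // ltW.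
rewrite /Ht; case: ifP => t0; last first.
  rewrite N20 mul0r; apply: addr_ge0; first apply: addr_ge0.
  - by rewrite !mulr_ge0 // ltW.
  - by rewrite mulr_ge0 // divr_ge0 ?mulr_ge0 // ltW.
  - by rewrite mulr_ge0 // mulr_ge0 ?N2_ge0 // ltW.
rewrite exponential_pdfE; last exact: ltW.
have -> : 4 * c ^+ 2 * N2 y / (2 * rho) * (2 * rho * expR (- (2 * rho) * t)) =
          4 * c ^+ 2 * N2 y * expR (- (2 * rho * t)).
  rewrite mulNr -mulrA; congr (_ * _); rewrite mulrA mulVf ?mul1r //.
  by rewrite gt_eqF // mulr_gt0.
have hD : N2 (f t (u + y) - f t 0) <= c ^+ 2 * N2 (u + y - 0).
  by apply: lip_N2 => //; exact: hl.
have hA : N2 (f t (u + y)) <= 2 * N2 (f t (u + y) - f t 0) + 2 * N2 (f t 0).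
  by rewrite -{1}(subrK (f t 0) (f t (u + y))); exact: N2D.
have hS := N2D u y; rewrite subr0 in hD.
set A := N2 (f t (u + y)) in hA *; set D := N2 _ in hD hA.
set F0 := N2 (f t 0) in hA *; set W := expR _ in W0 *.
set U := N2 u in hU hS *; set Y := N2 y in hY hS *.
set S := N2 (u + y) in hS hD.
have hA' : A <= 2 * c ^+ 2 * (2 * U + 2 * Y) + 2 * F0.
  have := ler_wpM2l hC hS; nra.
have := ler_wpM2r (ltW W0) hA'; nra.
Qed.


Lemma f0_int f (rho0 rho : R) :
  (forall (t : R) (y : 'rV[R[i]]_n), 0 < t -> forall eps : R, 0 < eps ->
     exists2 delta : R, 0 < delta &
       forall (s : R) (z : 'rV[R[i]]_n), 0 < s -> `|s - t| < delta ->
         cnorm (z - y) < delta -> cnorm (f s z - f t y) < eps) ->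
  0 < rho0 -> rho0 <= rho -> inL2w `]0, +oo[ rho0 (fun t => f t 0) ->
  (\int[lebesgue_measure]_(t in setT)
     (N2 (Ht f t 0) * expR (- (2 * rho * t)))%:E < +oo)%E.
Proof.
move=> hc r0 rr [_ hfin].
have m0 : cmeasurable setT (fun t => Ht f t 0) by exact: H_meas.
apply: (@int_le_fin _ _ (fun t => N2 (Ht f t 0) * expR (- (2 * rho0 * t)))).
- move=> t; rewrite mulr_ge0 ?N2_ge0 ?expR_ge0 //=.
  rewrite /Ht; case: ifP => t0; last by rewrite N20 !mul0r.
  apply: ler_wpM2l; first exact: N2_ge0.
  rewrite ler_expR lerN2; apply: ler_wpM2r; first exact: ltW.
  by rewrite ler_pM2l.
- exact: integrand_meas.
- exact: integrand_meas.
apply: le_lt_trans hfin; rewrite le_eqVlt; apply/orP; left; apply/eqP.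
rewrite /L2w_int [in RHS]integral_mkcond; apply: eq_integral => t _.
rewrite patchE.
have -> : (t \in `]0, +oo[%classic) = (0 < t) by rewrite mem_setE in_itv /= andbT.
rewrite /Ht; case: ifP => t0; first by rewrite cnorm2.
by rewrite N20 mul0r.
Qed.


Lemma L2_Frho f (c rho0 rho : R) (y : 'rV[R[i]]_n) (u : R -> 'rV[R[i]]_n) :
  (forall (t : R) (y : 'rV[R[i]]_n), 0 < t -> forall eps : R, 0 < eps ->
     exists2 delta : R, 0 < delta &
       forall (s : R) (z : 'rV[R[i]]_n), 0 < s -> `|s - t| < delta ->
         cnorm (z - y) < delta -> cnorm (f s z - f t y) < eps) ->
  0 <= c ->
  (forall (t : R) (y1 y2 : 'rV[R[i]]_n), 0 < t ->
       cnorm (f t y1 - f t y2) <= c * cnorm (y1 - y2)) ->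
  0 < rho0 -> rho0 <= rho -> inL2w `]0, +oo[ rho0 (fun t => f t 0) ->
  inL2w setT rho u -> inL2w setT rho (fun t => Ht f t (u t + y)).
Proof.
move=> hc c0 hl r0 rr hf0 [mu hu].
have rp : 0 < rho by apply: lt_le_trans rr.
have mF : cmeasurable setT (fun t => Ht f t (u t + y)).
  apply: (@comp_meas _ _ (Ht f) c) => //.
  - exact: H_meas.
  - exact: Ht_lip.
  - by apply: cmeas_add => //; exact: cmeas_cst.
split => //.
rewrite /L2w_int; under eq_integral do rewrite cnorm2.
have m0 : cmeasurable setT (fun t => Ht f t 0) by exact: H_meas.
have r2 : 0 <= 2 * rho by rewrite mulr_ge0 // ltW.
apply: (@int_le_fin _ _ (fun t => 4 * c ^+ 2 * (N2 (u t) * expR (- (2 * rho * t))) +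
  (4 * c ^+ 2 * N2 y / (2 * rho)) * exponential_pdf (2 * rho) t +
  2 * (N2 (Ht f t 0) * expR (- (2 * rho * t))))).
- move=> t; rewrite mulr_ge0 ?N2_ge0 ?expR_ge0 //=.
  exact: pt_bound.
- exact: integrand_meas.
- apply: measurable_funD; first apply: measurable_funD.
  + by apply: measurable_funM; [exact: measurable_cst | exact: integrand_meas].
  + by apply: measurable_funM; [exact: measurable_cst | exact: measurable_exponential_pdf].
  + by apply: measurable_funM; [exact: measurable_cst | exact: integrand_meas].
have hC : 0 <= 4 * c ^+ 2 by rewrite mulr_ge0 // sqr_ge0.
have hW t : 0 <= expR (- (2 * rho * t)) := expR_ge0 _.
apply: int_add_fin.
- move=> t; apply: addr_ge0; first by rewrite !mulr_ge0 ?N2_ge0.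
  by rewrite mulr_ge0 ?exponential_pdf_ge0 // divr_ge0 // mulr_ge0 // N2_ge0.
- by move=> t; rewrite !mulr_ge0 ?N2_ge0.
- apply: measurable_funD.
  + by apply: measurable_funM; [exact: measurable_cst | exact: integrand_meas].
  + by apply: measurable_funM; [exact: measurable_cst | exact: measurable_exponential_pdf].
- by apply: measurable_funM; [exact: measurable_cst | exact: integrand_meas].
- apply: int_add_fin.
  + by move=> t; rewrite !mulr_ge0 ?N2_ge0.
  + by move=> t; rewrite mulr_ge0 ?exponential_pdf_ge0 // divr_ge0 // mulr_ge0 // N2_ge0.
  + by apply: measurable_funM; [exact: measurable_cst | exact: integrand_meas].
  + by apply: measurable_funM; [exact: measurable_cst | exact: measurable_exponential_pdf].
  + apply: int_scale_fin => //.
    * by move=> t; rewrite mulr_ge0 ?N2_ge0.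
    * exact: integrand_meas.
    * by move: hu; rewrite /L2w_int; under eq_integral do rewrite cnorm2.
  + apply: int_scale_fin.
    * by rewrite divr_ge0 // mulr_ge0 // N2_ge0.
    * by move=> t; rewrite exponential_pdf_ge0.
    * exact: measurable_exponential_pdf.
    * by rewrite integral_exponential_pdf ?ltey // mulr_gt0.
- apply: int_scale_fin => //.
  + by move=> t; rewrite mulr_ge0 ?N2_ge0.
  + exact: integrand_meas.
  + exact: (@f0_int _ rho0).
Qed.


Lemma N2B (u v : 'rV[R[i]]_n) : N2 (u - v) <= 2 * N2 u + 2 * N2 v.
Proof.
rewrite /N2 !mulr_sumr -big_split /=; apply: ler_sum => i _.
rewrite !mxE -!/(_ - _) ReB ImB.
set a := complex.Re _. set b := complex.Re _. set c := complex.Im _. set d := complex.Im _.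
have := sqr_ge0 (a + b); have := sqr_ge0 (c + d); nra.
Qed.

Lemma lip_Frho f (c rho0 rho : R) (y : 'rV[R[i]]_n) (u v : R -> 'rV[R[i]]_n) :
  (forall (t : R) (y : 'rV[R[i]]_n), 0 < t -> forall eps : R, 0 < eps ->
     exists2 delta : R, 0 < delta &
       forall (s : R) (z : 'rV[R[i]]_n), 0 < s -> `|s - t| < delta ->
         cnorm (z - y) < delta -> cnorm (f s z - f t y) < eps) ->
  0 <= c ->
  (forall (t : R) (y1 y2 : 'rV[R[i]]_n), 0 < t ->
       cnorm (f t y1 - f t y2) <= c * cnorm (y1 - y2)) ->
  0 < rho0 -> rho0 <= rho -> inL2w `]0, +oo[ rho0 (fun t => f t 0) ->
  inL2w setT rho u -> inL2w setT rho v ->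
  L2norm rho ((fun t => Ht f t (u t + y)) \- (fun t => Ht f t (v t + y)))
    <= c * L2norm rho (u \- v).
Proof.
move=> hc c0 hl r0 rr hf0 hu hv.
have [mFu _] := L2_Frho _ _ _ _ y _ hc c0 hl r0 rr hf0 hu.
have [mFv _] := L2_Frho _ _ _ _ y _ hc c0 hl r0 rr hf0 hv.
case: hu => mu iu; case: hv => mv iv.
have mD : cmeasurable setT (fun t => Ht f t (u t + y) - Ht f t (v t + y)).
  exact: cmeas_sub.
have muv : cmeasurable setT (fun t => u t - v t) by exact: cmeas_sub.
rewrite /L2norm /L2w_int /=.
under eq_integral do rewrite cnorm2.
under [X in _ <= c * Num.sqrt (fine X)]eq_integral do rewrite cnorm2.
set I1 := integral _ _ _; set I2 := integral _ _ _.
have I10 : (0 <= I1)%E.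
  by apply: integral_ge0 => t _; rewrite lee_fin mulr_ge0 ?N2_ge0 ?expR_ge0.
have I20 : (0 <= I2)%E.
  by apply: integral_ge0 => t _; rewrite lee_fin mulr_ge0 ?N2_ge0 ?expR_ge0.
have I2f : (I2 < +oo)%E.
  apply: (@int_le_fin _ _ (fun t => 2 * (N2 (u t) * expR (- (2 * rho * t))) +
                                    2 * (N2 (v t) * expR (- (2 * rho * t))))).
  - move=> t; rewrite mulr_ge0 ?N2_ge0 ?expR_ge0 //=.
    rewrite !mulrA -mulrDl; apply: ler_wpM2r; first exact: expR_ge0.
    exact: N2B.
  - exact: integrand_meas.
  - by apply: measurable_funD; apply: measurable_funM;
      [exact: measurable_cst | exact: integrand_meas | exact: measurable_cst | exact: integrand_meas].
  apply: int_add_fin.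
  - by move=> t; rewrite !mulr_ge0 ?N2_ge0 ?expR_ge0.
  - by move=> t; rewrite !mulr_ge0 ?N2_ge0 ?expR_ge0.
  - by apply: measurable_funM; [exact: measurable_cst | exact: integrand_meas].
  - by apply: measurable_funM; [exact: measurable_cst | exact: integrand_meas].
  - apply: int_scale_fin => //.
    + by move=> t; rewrite mulr_ge0 ?N2_ge0 ?expR_ge0.
    + exact: integrand_meas.
    + by move: iu; rewrite /L2w_int; under eq_integral do rewrite cnorm2.
  - apply: int_scale_fin => //.
    + by move=> t; rewrite mulr_ge0 ?N2_ge0 ?expR_ge0.
    + exact: integrand_meas.
    + by move: iv; rewrite /L2w_int; under eq_integral do rewrite cnorm2.
have I12 : (I1 <= (c ^+ 2)%:E * I2)%E.
  have c2 : 0 <= c ^+ 2 by exact: sqr_ge0.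
  have mI : measurable_fun setT (fun t => (N2 (u t - v t) * expR (- (2 * rho * t)))%:E).
    by apply/measurable_EFinP; exact: integrand_meas.
  have pI : forall t, setT t -> (0 <= (N2 (u t - v t) * expR (- (2 * rho * t)))%:E)%E.
    by move=> t _; rewrite lee_fin mulr_ge0 ?N2_ge0 ?expR_ge0.
  rewrite /I2 -ge0_integralZl_EFin //.
  apply: ge0_le_integral => //.
  - by move=> t _; rewrite lee_fin mulr_ge0 ?N2_ge0 ?expR_ge0.
  - by apply/measurable_EFinP; exact: integrand_meas.
  - by apply/measurable_EFinP; apply: measurable_funM;
      [exact: measurable_cst | exact: integrand_meas].
  move=> t _; rewrite lee_fin mulrA; apply: ler_wpM2r; first exact: expR_ge0.
  rewrite -[u t - v t](_ : (u t + y) - (v t + y) = u t - v t); last first.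
    by rewrite opprD addrACA subrr addr0.
  by apply: lip_N2 => //; exact: Ht_lip.
have I1f : (I1 < +oo)%E.
  apply: (le_lt_trans I12); apply: lte_mul_pinfty => //.
  by rewrite lee_fin sqr_ge0.
have fI1 : I1 \is a fin_num by rewrite ge0_fin_numE.
have fI2 : I2 \is a fin_num by rewrite ge0_fin_numE.
move: I12; rewrite -(fineK fI1) -(fineK fI2) -EFinM lee_fin => h.
rewrite -(ger0_norm c0) -sqrtr_sqr -sqrtrM ?sqr_ge0 //.
by rewrite ler_sqrt // mulr_ge0 // ?sqr_ge0 // -lee_fin fineK // .
Qed.


Lemma cont_sq (g : R -> R) : continuous g -> continuous (fun t => g t ^+ 2).
Proof. by move=> cg x; apply: (@continuous_comp _ _ _ g (fun y : R => y ^+ 2)); [exact: cg | exact: exprn_continuous]. Qed.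

Lemma cont_add (g h : R -> R) : continuous g -> continuous h -> continuous (fun t => g t + h t).
Proof. by move=> cg ch x; apply: cvgD; [exact: cg | exact: ch]. Qed.

Lemma Cc_L2 (phi : R -> 'rV[R[i]]_n) (rho : R) : 0 < rho -> Cc_infty phi ->
  inL2w setT rho phi.
Proof.
move=> rp [hs [M hM]].
have cc i b : continuous (fun t => proj b (phi t 0 i)).
  move=> x; have [h1 h2] := hs i.
  by case: b; [move: (h1 0%N x) | move: (h2 0%N x)] => /= /derivable1_diffP /differentiable_continuous.
have mphi : cmeasurable setT phi.
  by apply/cmeasurableP => i b; exact: continuous_measurable_fun.
split => //.
set M' := Num.max M 0.
have M'0 : 0 <= M' by rewrite le_max lexx orbT.
have cs : continuous (fun t => N2 (phi t)).
  rewrite /N2; apply: continuous_big; first exact: add_continuous.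
  move=> i _; apply: cont_add; apply: cont_sq; [exact: (cc i true) | exact: (cc i false)].
have hMM : - M' <= M' by lra.
have [cm cmI hB] := @EVT_max _ (fun t => N2 (phi t)) (- M') M'
  hMM (continuous_subspaceT cs).
set B := N2 (phi cm) in hB.
have B0 : 0 <= B by exact: N2_ge0.
rewrite /L2w_int; under eq_integral do rewrite cnorm2.
apply: (@int_le_fin _ _ (fun t => (B * expR (2 * rho * M')) * \1_(`[- M', M']) t)).
- move=> t; rewrite mulr_ge0 ?N2_ge0 ?expR_ge0 //=.
  rewrite indicE.
  have MM : M <= M' by rewrite le_max lexx.
  have [tI | tI] := boolP (t \in `[- M', M']).
    have /andP[ta tb] : (- M' <= t) && (t <= M') by move: tI; rewrite mem_setE /= in_itv.
    rewrite mulr1; apply: ler_pM; rewrite ?N2_ge0 ?expR_ge0 //.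
      by apply: hB; rewrite in_itv /= ta tb.
    by rewrite ler_expR; nra.
  have : ~~ ((- M' <= t) && (t <= M')) by move: tI; rewrite mem_setE /= in_itv.
  rewrite negb_and -!ltNge => tO.
  have -> : phi t = 0.
    apply: hM; rewrite ltr_normr; apply/orP.
    by case/orP: tO => h; [right | left]; lra.
  by rewrite N20 !mul0r mulr_ge0 // mulr_ge0 // expR_ge0.
- exact: integrand_meas.
- by apply: measurable_funM; [exact: measurable_cst | exact: measurable_indic].
apply: int_scale_fin.
- by rewrite mulr_ge0 // expR_ge0.
- by move=> t; rewrite indicE ler0n.
- exact: measurable_indic.
rewrite integral_indic // setIT.
have := lebesgue_measure_itv `[- M', M']%R; move=> /= ->.
by case: ifP => _; rewrite ?ltey // -EFinD ltey.
Qed.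

End main.

Theorem proposition6p1 (R : realType) (rho0 : R) (n : nat) (y0 : 'rV[R]_n)
  (f : R -> 'rV[R[i]]_n -> 'rV[R[i]]_n) :
  0 < rho0 ->
  (* f continuous on R_{>0} x C^n *)
  (forall (t : R) (y : 'rV[R[i]]_n), 0 < t -> forall eps : R, 0 < eps ->
     exists2 delta : R, 0 < delta &
       forall (s : R) (z : 'rV[R[i]]_n), 0 < s -> `|s - t| < delta ->
         cnorm (z - y) < delta -> cnorm (f s z - f t y) < eps) ->
  (* uniform Lipschitz condition *)
  (exists2 c : R, 0 <= c &
     forall (t : R) (y1 y2 : 'rV[R[i]]_n), 0 < t ->
       cnorm (f t y1 - f t y2) <= c * cnorm (y1 - y2)) ->
  (* t |-> f(t,0) in L^2_rho0(R_{>0}; C^n) *)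
  inL2w `]0, +oo[ rho0 (fun t => f t 0) ->
  eventually_00_Lipschitz rho0
    (fun (phi : R -> 'rV[R[i]]_n) (t : R) =>
       let ftilde := fun (s : R) (y : 'rV[R[i]]_n) => if 0 < s then f s y else 0 in
       ftilde t (phi t + real_to_cvec y0)).
Proof.
move=> r0 hc [c c0 hl] hf0.
exists rho0; split => //; exists c => rho rr.
have rp : 0 < rho by apply: lt_le_trans rr.
pose Frho := fun (u : R -> 'rV[R[i]]_n) (t : R) => Ht f t (u t + real_to_cvec y0).
have hF : forall u, inL2w setT rho u -> inL2w setT rho (Frho u).
  by move=> u hu; exact: (L2_Frho _ _ _ _ _ _ hc c0 hl r0 rr hf0 hu).
split.
  by move=> phi hphi; exact: (hF phi (Cc_L2 _ _ rp hphi)).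
exists Frho; split; first exact: hF.
split.
  by move=> phi _; apply: aeW => t.
by move=> u v hu hv; exact: (lip_Frho _ _ _ _ _ _ _ hc c0 hl r0 rr hf0 hu hv).
Qed.
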